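(* Let $\tau>0$, $u_n\in\mathcal V_{[0,1]}$ with $M:=\mathcal M(u_n)\in(0,\mathcal M(\mathbf 1))$. Let $\alpha_1<\dots<\alpha_K$ be the distinct values of $e^{-\tau\Delta}u_n$, $a_\alpha:=\sum_{i:(e^{-\tau\Delta}u_n)_i=\alpha}d_i^r$, and $k\in\{1,\dots,K\}$ the unique index with $\sum_{l=k+1}^K a_{\alpha_l} < M \leq \sum_{l=k}^K a_{\alpha_l}$. For $0\le\lambda<1$ let $u^\lambda_{n+1}$ be the unique minimiser of $(1-\lambda)\|u\|^2_{\mathcal V}-2\langle u,e^{-\tau\Delta}u_n\rangle_{\mathcal V}$ over $\{u\in\mathcal V_{[0,1]}:\mathcal M(u)=M\}$. Then there is $\delta>0$, depending only on $e^{-\tau\Delta}u_n$, such that for every $\lambda\in(1-\delta,1)$ and all $i\in V$ \[ (u^\lambda _{n+1})_i=\begin{cases} 0, &\text{if } (e^{-\tau\Delta}u_n)_i< \alpha_{k}, \\ a_{\alpha_k}^{-1}\left(M - \sum_{l=k+1}^K a_{\alpha_l}\right) , &\text{if } (e^{-\tau\Delta}u_n)_i =\alpha_k,\\ 1, &\text{if } (e^{-\tau\Delta}u_n)_i > \alpha_{k}, \end{cases} \] and hence $u^\lambda_{n+1}$ converges as $\lambda\uparrow1$ to the function given by the right-hand side.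
   Context: $G=(V,E)$ is a finite, simple, connected, undirected graph with weights $\omega_{ij}=\omega_{ji}>0$ for $ij\in E$, $\omega_{ij}=0$ otherwise; $d_i=\sum_j\omega_{ij}$, $r\in[0,1]$ fixed. $\mathcal V$ = functions $V\to\mathbb R$ with $\langle u,v\rangle_{\mathcal V}=\sum_i u_iv_id_i^r$ and norm $\|\cdot\|_{\mathcal V}$; $\mathcal V_{[0,1]}$ = functions $V\to[0,1]$. $(\Delta u)_i=d_i^{-r}\sum_j\omega_{ij}(u_i-u_j)$, $e^{-\tau\Delta}$ its matrix exponential. $\mathbf 1$ all-ones; $\mathcal M(u)=\langle u,\mathbf 1\rangle_{\mathcal V}$. *)

(* Defs.v *)
From HB Require Import structures.
From mathcomp Require Import all_boot all_order all_algebra.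
From mathcomp Require Import all_classical all_reals all_analysis.
Set Implicit Arguments. Unset Strict Implicit. Unset Printing Implicit Defensive.
Import Order.TTheory GRing.Theory Num.Theory.
Local Open Scope ring_scope.

Section GraphDefs.
Variables (R : realType) (n : nat).
Implicit Types (w : 'I_n -> 'I_n -> R) (u v : 'I_n -> R).

Definition weighted_graph w : Prop :=
  (forall i j, w i j = w j i) /\ (forall i j, 0 <= w i j) /\ (forall i, w i i = 0) /\
  (forall i j, connect (fun a b => 0 < w a b) i j).

Definition deg w (i : 'I_n) : R := \sum_j w i j.

Definition dr w (r : R) (i : 'I_n) : R := powR (deg w i) r.

Definition inner w r u v : R := \sum_i u i * v i * dr w r i.
Definition sqnorm w r u : R := inner w r u u.
Definition mass w r u : R := inner w r u (fun _ => 1).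

(* matrix of the graph Laplacian: (Delta u)_i = d_i^{-r} sum_j w_ij (u_i - u_j) *)
Definition lapmx w (r : R) : 'M[R]_n :=
  \matrix_(i, j) ((dr w r i)^-1 * ((i == j)%:R * deg w i - w i j)).

Definition expmx (A : 'M[R]_n) : 'M[R]_n :=
  \matrix_(i, j) limn (fun N : nat => \sum_(k < N) (A ^+ k) i j / (k`!)%:R).

Definition heat w r (tau : R) u : 'I_n -> R :=
  fun i => \sum_j expmx (- tau *: lapmx w r) i j * u j.

Definition in01 u : Prop := forall i, 0 <= u i <= 1.

Definition is_minimiser w r (lam M : R) v u : Prop :=
  in01 u /\ mass w r u = M /\
  forall u', in01 u' -> mass w r u' = M ->
    (1 - lam) * sqnorm w r u - 2 * inner w r u v
      <= (1 - lam) * sqnorm w r u' - 2 * inner w r u' v.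

(* the limiting profile, with threshold value alpha = alpha_k *)
Definition thresh_profile w r (M alpha : R) v : 'I_n -> R :=
  fun i => if v i < alpha then 0
           else if v i == alpha then
             (\sum_(j | v j == alpha) dr w r j)^-1 *
               (M - \sum_(j | alpha < v j) dr w r j)
           else 1.
End GraphDefs.

(* Main.v *)
Require Import Defs.
From HB Require Import structures.
From mathcomp Require Import all_boot all_order all_algebra.
From mathcomp Require Import all_classical all_reals all_analysis.
From mathcomp Require Import ring lra.
Import Order.TTheory GRing.Theory Num.Theory.
Import numFieldNormedType.Exports.
Local Open Scope ring_scope.
Local Open Scope classical_set_scope.

Lemma dr_pos (R : realType) (n : nat) (w : 'I_n -> 'I_n -> R) (r : R) (un : 'I_n -> R) :
  weighted_graph w -> 0 < mass w r un -> forall i, 0 < dr w r i.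
Proof.
move=> [_ [wge0 [_ wcon]]] hm i.
rewrite lt_neqAle powR_ge0 andbT eq_sym; apply/negP => /eqP h0.
have hd := powR_eq0_eq0 h0.
have wi0 : forall j, w i j = 0.
  move=> j; move/eqP: hd; rewrite /deg psumr_eq0; last by move=> k _; exact: wge0.
  by move/allP => /(_ j (mem_index_enum j)) /eqP.
have alli : forall j, j = i.
  move=> j; move/connectP: (wcon i j) => [[|x p] /= hp ->] //.
  by move: hp => /andP [] ; rewrite wi0 ltxx.
move: hm; rewrite /mass /inner (eq_bigr (fun _ => 0)) ?big1 ?ltxx // => j _.
rewrite (alli j); move: h0; rewrite /dr => ->; by rewrite mulr0.
Qed.
Lemma key (R : realType) (n : nat) (w : 'I_n -> 'I_n -> R) (r : R) (v : 'I_n -> R)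
  (M al eps : R) :
  (forall i, 0 < dr w r i) -> 0 < eps ->
  (forall i, v i != al -> eps <= `|v i - al|) ->
  \sum_(j | al < v j) dr w r j < M <= \sum_(j | al <= v j) dr w r j ->
  forall u, in01 u -> mass w r u = M ->
  (forall u', in01 u' -> mass w r u' = M ->
    eps * sqnorm w r u - 2 * inner w r u v <= eps * sqnorm w r u' - 2 * inner w r u' v) ->
  forall i, u i = thresh_profile w r M al v i.
Proof.
move=> dpos epos gap /andP[hS hM] u u01 um umin.
set d := dr w r.
set S := \sum_(j | al < v j) d j.
set a := \sum_(j | v j == al) d j.
have hsplit : \sum_(j | al <= v j) d j = a + S.
  rewrite (bigID (fun j => v j == al)) /=; congr (_ + _); apply: eq_bigl => j.
    by case: eqP => [->|]; rewrite ?lexx ?andbF.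
  by rewrite lt_neqAle andbC eq_sym.
rewrite hsplit in hM.
have apos : 0 < a by rewrite -(ltrD2r S) add0r; apply: lt_le_trans hM.
set c := a^-1 * (M - S).
have cpos : 0 < c by rewrite /c mulr_gt0 ?invr_gt0 // subr_gt0.
have cle1 : c <= 1 by rewrite /c mulrC ler_pdivrMr // mul1r lerBlDr.
set p := thresh_profile w r M al v.
have pE : forall i, p i = if v i < al then 0 else if v i == al then c else 1 by [].
have p01 : in01 p.
  move=> i; rewrite pE; case: (v i < al); first by rewrite lexx ler01.
  by case: (v i == al); rewrite ?(ltW cpos) ?cle1 ?ler01 ?lexx.
have pm : mass w r p = M.
  rewrite /mass /inner.
  transitivity (\sum_i (c * (if v i == al then d i else 0) + (if al < v i then d i else 0))).
    apply: eq_bigr => i _; rewrite pE mulr1.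
    by case: (ltgtP (v i) al) => h; rewrite ?mulr0 ?addr0 ?mul0r ?add0r ?mul1r.
  rewrite big_split /= -mulr_sumr -!big_mkcond /= -/a -/S /c.
  by rewrite mulrC mulrA mulrV ?unitfE ?gt_eqF // mul1r subrK.
set mu := al - eps * c.
set h := fun i => u i - p i.
set g := fun i => eps * p i - v i + mu.
have hg0 : forall i, 0 <= d i * h i * g i.
  move=> i; rewrite -mulrA; apply: mulr_ge0; first exact: ltW.
  have := u01 i; rewrite /h /g /mu pE => /andP[u0 u1].
  case: (ltgtP (v i) al) => hv.
  - rewrite subr0 mulr0 sub0r; apply: mulr_ge0 => //.
    have := gap i; rewrite lt_eqF // ler0_norm ?subr_le0 ?(ltW hv) //.
    move=> /(_ isT) he.
    have : eps * c <= eps by rewrite ler_piMr // ltW.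
    lra.
  - apply: mulr_le0; first by rewrite subr_le0.
    have := gap i; rewrite gt_eqF // ger0_norm ?subr_ge0 ?(ltW hv) //.
    move=> /(_ isT) he.
    have : eps * (1 - c) <= eps.
      rewrite ler_piMr ?(ltW epos) //; lra.
    lra.
  - rewrite hv; have -> : eps * c - al + (al - eps * c) = 0 by ring.
    by rewrite mulr0.
have E : eps * sqnorm w r u - 2 * inner w r u v - (eps * sqnorm w r p - 2 * inner w r p v)
   = eps * \sum_i (d i * h i * h i) + 2 * \sum_i (d i * h i * g i)
     - 2 * mu * (mass w r u - mass w r p).
  rewrite /sqnorm /inner /mass /inner !mulr_sumr -!sumrB mulr_sumr -big_split /= -sumrB.
  by apply: eq_bigr => i _; rewrite /h /g /d /=; ring.
have := umin p p01 pm; rewrite -subr_le0 E um pm subrr mulr0 subr0 => hle.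
have hsum0 : 0 <= \sum_i d i * h i * g i by apply: sumr_ge0 => i _.
have hh0 : forall i, 0 <= d i * h i * h i.
  by move=> i; have := sqr_ge0 (h i); rewrite expr2 => hq; rewrite -mulrA; apply: mulr_ge0 => //; exact: ltW.
have hsumh : 0 <= \sum_i d i * h i * h i by apply: sumr_ge0 => i _.
have : \sum_i d i * h i * h i <= 0.
  have : eps * \sum_i d i * h i * h i <= 0 by lra.
  by rewrite pmulr_rle0.
move=> hs0 i.
have /eqP : \sum_i d i * h i * h i = 0 by apply/eqP; rewrite eq_le hs0 hsumh.
rewrite psumr_eq0; last by move=> j _; exact: hh0.
move=> /allP /(_ i (mem_index_enum i)) /=.
rewrite -mulrA mulf_eq0 gt_eqF // /= mulf_eq0 orbb /h subr_eq0 => /eqP //.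
Qed.

Theorem theorem31 (R : realType) (n : nat) (w : 'I_n -> 'I_n -> R) (r tau : R)
  (un : 'I_n -> R) :
  weighted_graph w -> 0 <= r <= 1 -> 0 < tau -> in01 un ->
  0 < mass w r un < mass w r (fun _ => 1) ->
  let M := mass w r un in
  let v := heat w r tau un in
  exists delta : R, 0 < delta /\
    (forall lam : R, 0 <= lam -> 1 - delta < lam -> lam < 1 ->
      forall alpha : R, (exists i, v i = alpha) ->
        \sum_(j | alpha < v j) dr w r j < M <= \sum_(j | alpha <= v j) dr w r j ->
      forall u, is_minimiser w r lam M v u ->
      forall i, u i = thresh_profile w r M alpha v i) /\
    (forall ul : R -> 'I_n -> R,
      (forall lam : R, 0 <= lam < 1 -> is_minimiser w r lam M v (ul lam)) ->
      forall alpha : R, (exists i, v i = alpha) ->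
        \sum_(j | alpha < v j) dr w r j < M <= \sum_(j | alpha <= v j) dr w r j ->
      forall i, (fun lam => ul lam i) @ 1^'- --> thresh_profile w r M alpha v i).
Proof.
move=> hw hr htau hun /andP[hm0 hm1] M v.
have dpos := @dr_pos _ _ w r un hw hm0.
set F := fun ij : 'I_n * 'I_n => if v ij.1 == v ij.2 then 1 else `|v ij.1 - v ij.2|.
set delta := \big[Order.min/1]_(ij : 'I_n * 'I_n) F ij.
have dlt : 0 < delta.
  rewrite /delta; apply: (big_ind (fun x => 0 < x)) => //.
    by move=> x y hx hy; rewrite lt_min hx hy.
  move=> ij _; rewrite /F; case: eqP => // /eqP.
  by rewrite normr_gt0 subr_eq0.
have gapP : forall al, (exists i, v i = al) -> forall i, v i != al -> delta <= `|v i - al|.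
  move=> al [i0 <-] i hne.
  by apply: le_trans (bigmin_le _ (i, i0) _) _; rewrite /F /= (negbTE hne).
have P1 : forall lam : R, 0 <= lam -> 1 - delta < lam -> lam < 1 ->
      forall alpha : R, (exists i, v i = alpha) ->
        \sum_(j | alpha < v j) dr w r j < M <= \sum_(j | alpha <= v j) dr w r j ->
      forall u, is_minimiser w r lam M v u ->
      forall i, u i = thresh_profile w r M alpha v i.
  move=> lam _ hl1 hl2 al hal hS u [u01 [um umin]].
  apply: (@key _ _ w r v M al (1 - lam) dpos _ _ hS u u01 um umin); first by rewrite subr_gt0.
  move=> i hne; apply: le_trans (gapP al hal i hne).
  apply: ltW; lra.
exists delta; split => //; split => //.
move=> ul hul al hal hS i.
apply: cvg_near_cst.
near=> lam.
apply: (P1 lam _ _ _ al hal hS); last apply: hul; try (apply/andP; split).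
- near: lam; apply: nbhs_left_ge; exact: ltr01.
- near: lam; apply: nbhs_left_gt; lra.
- near: lam; exact: nbhs_left_lt.
- near: lam; apply: nbhs_left_ge; exact: ltr01.
- near: lam; exact: nbhs_left_lt.
Unshelve. all: by end_near.
Qed.
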